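(* Let $S\subseteq\Sigma^n$ be a double-MDS-code and let $\gamma$ be the number of connected components of $G(S)$ (equivalently, the number of prime double-codes contained in $S$). (a) If $G(S)$ is bipartite, then $S$ contains exactly $2^\gamma$ distinct subsets that are $(n,2)_4$ MDS codes. (b) If $G(S)$ is not bipartite, then $S$ contains no $(n,2)_4$ MDS code.
   Context: Let $\Sigma=\{0,1,2,3\}$. An $i$-line of $\Sigma^n$ is a set of the four words that agree in all coordinates except the $i$th; a line is an $i$-line for some $i$. An $(n,2)_4$ MDS code is a set meeting every line in exactly one element. A double-code is a set meeting every line in $0$ or $2$ elements; a double-MDS-code is a set meeting every line in exactly $2$ elements; a double-code is complementable if contained in a double-MDS-code, and prime if complementable, nonempty and not partitionable into two or more nonempty double-codes. The adjacency graph $G(S)$ has vertex set $S$, two vertices being adjacent iff they differ in exactly one coordinate. *)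

(* Defs.v *)
From mathcomp Require Import all_boot.
Set Implicit Arguments. Unset Strict Implicit. Unset Printing Implicit Defensive.

(* Sigma = {0,1,2,3} = 'I_4 ; words of Sigma^n are finite functions 'I_n -> 'I_4 *)
Definition word (n : nat) := {ffun 'I_n -> 'I_4}.

Definition line n (i : 'I_n) (x : word n) : {set word n} :=
  [set y : word n | [forall j : 'I_n, (j != i) ==> (y j == x j)]].

Definition meets_every_line_in n (S : {set word n}) (k : nat) : bool :=
  [forall i : 'I_n, forall x : word n, #|S :&: line i x| == k].

Definition is_MDS n (S : {set word n}) : bool := meets_every_line_in S 1.

Definition is_double_MDS n (S : {set word n}) : bool := meets_every_line_in S 2.

Definition adjacent n (x y : word n) : bool := #|[set i : 'I_n | x i != y i]| == 1.

Definition GS_rel n (S : {set word n}) : rel (word n) :=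
  [rel x y | [&& x \in S, y \in S & adjacent x y]].

Definition component n (S : {set word n}) (x : word n) : {set word n} :=
  [set y in S | connect (GS_rel S) x y].

Definition num_components n (S : {set word n}) : nat :=
  #|[set component S x | x in S]|.

Definition bipartite n (S : {set word n}) : Prop :=
  exists c : word n -> bool,
    forall x y, x \in S -> y \in S -> adjacent x y -> c x != c y.

(* Main.v *)
Require Import Defs.
From mathcomp Require Import all_boot.

Set Implicit Arguments. Unset Strict Implicit. Unset Printing Implicit Defensive.

Lemma adj_sym n (x y : word n) : adjacent x y = adjacent y x.
Proof.
rewrite /adjacent (_ : [set i | x i != y i] = [set i | y i != x i]) //.
by apply/setP=> i; rewrite !inE eq_sym.
Qed.

Lemma adj_neq n (x y : word n) : adjacent x y -> x != y.
Proof.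
move=> h; apply/eqP=> e; move: h; rewrite e /adjacent.
have -> : [set i : 'I_n | y i != y i] = set0 by apply/setP=> i; rewrite !inE eqxx.
by rewrite cards0.
Qed.

Lemma card_I2 n (C : {set word n}) a b : a != b ->
  #|C :&: [set a; b]| = (a \in C) + (b \in C).
Proof.
move=> nab.
case Ha: (a \in C); case Hb: (b \in C).
- have -> : C :&: [set a; b] = [set a; b].
    apply/setP=> z; rewrite !inE; case: (eqVneq z a) => [->|_]; first by rewrite Ha.
    by case: (eqVneq z b) => [->|_]; rewrite ?Hb ?andbF.
  by rewrite cards2 nab.
- have -> : C :&: [set a; b] = [set a].
    apply/setP=> z; rewrite !inE; case: (eqVneq z a) => [->|_]; first by rewrite Ha.
    by case: (eqVneq z b) => [->|_]; rewrite ?Hb ?andbF.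
  by rewrite cards1.
- have -> : C :&: [set a; b] = [set b].
    apply/setP=> z; rewrite !inE; case: (eqVneq z a) => [->|_].
      by rewrite Ha (negbTE nab).
    by case: (eqVneq z b) => [->|_]; rewrite ?Hb ?andbF.
  by rewrite cards1.
- have -> : C :&: [set a; b] = set0.
    apply/setP=> z; rewrite !inE; case: (eqVneq z a) => [->|_]; first by rewrite Ha.
    by case: (eqVneq z b) => [->|_]; rewrite ?Hb ?andbF.
  by rewrite cards0.
Qed.

Lemma key1 n (S : {set word n}) a b : is_double_MDS S -> a \in S -> b \in S ->
  adjacent a b -> exists i, S :&: line i a = [set a; b].
Proof.
move=> /forallP HS aS bS hab.
have nab := adj_neq hab.
move: (hab); rewrite /adjacent => /cards1P [i Hi].
exists i; apply/eqP; rewrite eq_sym eqEcard.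
have /forallP/(_ a)/eqP -> := HS i.
rewrite cards2 nab andbT.
apply/subsetP=> z; rewrite !inE => /orP [] /eqP ->; rewrite ?aS ?bS /=;
  apply/forallP=> j; apply/implyP=> ji //.
apply/negPn/negP=> hj.
have : j \in [set i0 | a i0 != b i0] by rewrite inE eq_sym.
by rewrite Hi inE (negbTE ji).
Qed.

Lemma key2 n (S : {set word n}) i x : is_double_MDS S ->
  exists a b, [/\ a \in S, b \in S, adjacent a b, a != b & S :&: line i x = [set a; b]].
Proof.
move=> /forallP/(_ i)/forallP/(_ x)/cards2P [a [b [nab E]]].
have aS : a \in S :&: line i x by rewrite E !inE eqxx.
have bS : b \in S :&: line i x by rewrite E !inE eqxx orbT.
move: aS bS; rewrite !inE => /andP [aS /forallP la] /andP [bS /forallP lb].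
exists a, b; split => //.
rewrite /adjacent; apply/cards1P; exists i; apply/setP=> j; rewrite !inE.
case: (eqVneq j i) => [->|ji].
  apply/negP=> /eqP ei; move/negP: nab; apply; apply/eqP/ffunP=> k.
  case: (eqVneq k i) => [->//|ki].
  by have /implyP/(_ ki)/eqP -> := la k; have /implyP/(_ ki)/eqP -> := lb k.
by have /implyP/(_ ji)/eqP -> := la j; have /implyP/(_ ji)/eqP -> := lb j; rewrite eqxx.
Qed.

Definition valid n (S C : {set word n}) :=
  forall a b, a \in S -> b \in S -> adjacent a b -> (a \in C) != (b \in C).

Lemma MDS_valid n (S C : {set word n}) : is_double_MDS S -> C \subset S ->
  is_MDS C <-> valid S C.
Proof.
move=> HS CS.
have CI : forall L, C :&: L = C :&: (S :&: L).
  by move=> L; rewrite setIA (setIidPl CS).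
split.
- move=> /forallP HC a b aS bS hab.
  have [i Ei] := key1 HS aS bS hab.
  have /forallP/(_ a)/eqP := HC i.
  rewrite CI Ei card_I2 ?adj_neq //.
  by case: (a \in C); case: (b \in C).
- move=> HV; apply/forallP=> i; apply/forallP=> x.
  have [a [b [aS bS hab nab E]]] := key2 i x HS.
  rewrite CI E card_I2 //.
  by move: (HV a b aS bS hab); case: (a \in C); case: (b \in C).
Qed.

Lemma GS_sym n (S : {set word n}) : symmetric (GS_rel S).
Proof. by move=> x y; rewrite /GS_rel /= adj_sym andbCA. Qed.

Lemma comp_self n (S : {set word n}) x : x \in S -> x \in component S x.
Proof. by move=> xS; rewrite inE xS connect0. Qed.

Lemma comp_eq_connect n (S : {set word n}) x y : x \in S ->
  component S x = component S y -> connect (GS_rel S) y x.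
Proof. move=> xS E; have := comp_self xS; rewrite E inE => /andP [] //. Qed.

Lemma connect_comp n (S : {set word n}) x y :
  connect (GS_rel S) x y -> component S x = component S y.
Proof.
move=> cxy; have cs := sym_connect_sym (GS_sym S).
apply/setP=> z; rewrite !inE; congr (_ && _); apply/idP/idP => h.
  by apply: connect_trans h; rewrite cs.
by apply: connect_trans h.
Qed.

Lemma comp_adj n (S : {set word n}) a b : a \in S -> b \in S -> adjacent a b ->
  component S a = component S b.
Proof. by move=> aS bS hab; apply: connect_comp; apply: connect1; rewrite /GS_rel /= aS bS. Qed.

Theorem proposition5 (n : nat) (S : {set word n}) :
  is_double_MDS S ->
  (bipartite S ->
     #|[set C : {set word n} | (C \subset S) && is_MDS C]| = 2 ^ num_components S)
  /\
  (~ bipartite S -> forall C : {set word n}, C \subset S -> ~~ is_MDS C).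
Proof.
move=> HS; split; last first.
  move=> nb C CS; apply/negP=> /(MDS_valid HS CS) HV; apply: nb.
  by exists (fun x => x \in C) => x y xS yS hxy; apply: HV.
move=> [c0 Hc0].
pose comps := [set component S x | x in S].
pose g (T : {set {set word n}}) := [set x in S | c0 x (+) (component S x \in T)].
have gS : forall T, g T \subset S by move=> T; apply/subsetP=> z; rewrite inE => /andP [].
have Eset : [set C : {set word n} | (C \subset S) && is_MDS C] = g @: powerset comps.
  apply/setP=> C; rewrite inE; apply/idP/imsetP.
  - move=> /andP [CS /(MDS_valid HS CS) HV].
    pose f z := (z \in C) (+) c0 z.
    have inv : forall y z, connect (GS_rel S) y z -> f y = f z.
      move=> y z; apply: (closed_connect (a := [pred w | f w])).
      move=> u v; rewrite /GS_rel /= => /andP [uS /andP [vS huv]].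
      have := HV u v uS vS huv; have := Hc0 u v uS vS huv; rewrite /f.
      by rewrite !inE; case: (u \in C); case: (v \in C); case: (c0 u); case: (c0 v).
    exists [set component S x | x in [set x in S | f x]].
      rewrite powersetE; apply/subsetP=> K /imsetP [x]; rewrite inE => /andP [xS _] ->.
      by apply/imsetP; exists x.
    apply/setP=> z; rewrite inE.
    case zS: (z \in S); last by apply/negbTE; apply: contraFN zS; apply: (subsetP CS).
    rewrite /=.
    have -> : (component S z \in [set component S x | x in [set x in S | f x]]) = f z.
      apply/imsetP/idP.
        move=> [y]; rewrite inE => /andP [yS fy] E.
        by rewrite -(inv y z) //; apply: comp_eq_connect; rewrite ?E.
      by move=> fz; exists z => //; rewrite inE zS.
    by rewrite /f; case: (z \in C); case: (c0 z).
  - move=> [T _ ->]; rewrite gS /=; apply/(MDS_valid HS (gS T)).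
    move=> a b aS bS hab; rewrite !inE aS bS /= (comp_adj aS bS hab).
    by have := Hc0 a b aS bS hab; case: (c0 a); case: (c0 b); case: (_ \in T).
rewrite Eset card_in_imset ?card_powerset //.
move=> T1 T2; rewrite !powersetE => T1s T2s E.
apply/setP=> K.
case Kc: (K \in comps); last first.
  by apply/idP/idP => h; [move: (subsetP T1s K h) | move: (subsetP T2s K h)]; rewrite Kc.
move: Kc => /imsetP [x xS ->].
move/setP: E => /(_ x); rewrite /g !inE xS /=.
by case: (c0 x); case: (_ \in T1); case: (_ \in T2).
Qed.
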